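(* Let $L$ be a post-Lie-Rinehart algebra over $R$, with anchor map $\rho$ and connection $\rhd$. Then $E\ell_R(L)$ is a subalgebra of the algebra (under composition) generated by $\{\delta X,\tilde{\delta}X : X\in L\}$.
   Context: Let $R$ be a commutative unital algebra. A Lie-Rinehart algebra over $R$ is an $R$-module $L$ with a Lie bracket $\llbracket\cdot,\cdot\rrbracket$ and an $R$-linear Lie algebra morphism $\rho:L\to\mathrm{Der}(R)$ (the anchor) such that $\llbracket X,fY\rrbracket=(\rho(X)f)Y+f\llbracket X,Y\rrbracket$ for $f\in R$ and $X,Y\in L$. A connection is a map $L\times L\to L$, $(X,Y)\mapsto X\rhd Y$, that is $R$-linear in $X$ and satisfies $X\rhd(fY)=(\rho(X)f)Y+f\,X\rhd Y$. Its torsion is $T(X,Y)=X\rhd Y-Y\rhd X-\llbracket X,Y\rrbracket$ and its curvature is $\mathcal{R}(X,Y,Z)=X\rhd(Y\rhd Z)-Y\rhd(X\rhd Z)-\llbracket X,Y\rrbracket\rhd Z$. A post-Lie-Rinehart algebra is a Lie-Rinehart algebra with a connection that is flat ($\mathcal{R}=0$) and has constant torsion ($X\rhd T(Y,Z)=T(X\rhd Y,Z)+T(Y,X\rhd Z)$). Put $[X,Y]:=-T(X,Y)$; then $(L,[\cdot,\cdot],\rhd)$ is a post-Lie algebra. The connection extends to $\mathrm{Hom}_R(L)$ by $(X\rhd u)(Y)=X\rhd u(Y)-u(X\rhd Y)$. For $X\in L$ define $\delta X\in\mathrm{Hom}_R(L)$ by $\delta X(Z)=Z\rhd X$, and $\tilde\delta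 X$ by $\tilde\delta X(Z)=Z\rhd X+[Z,X]$. $E\ell_R(L)$, the algebra of elementary $R$-module endomorphisms, is the $R$-module subalgebra of $\mathrm{Hom}_R(L)$ (with composition as product) generated by the elements $Y_1\rhd(Y_2\rhd(\cdots(Y_n\rhd\delta X)\cdots))$ with $n\ge 0$ and $X,Y_1,\dots,Y_n\in L$. *)

(* Defs.v *)
From HB Require Import structures.
From mathcomp Require Import all_boot all_order all_algebra.
Set Implicit Arguments. Unset Strict Implicit. Unset Printing Implicit Defensive.
Import GRing.Theory.
Local Open Scope ring_scope.

Section PostLieRinehart.
Variables (k : fieldType) (R : comAlgType k) (L : lmodType R).
Variables (lb : L -> L -> L) (rho : L -> R -> R) (conn : L -> L -> L).

Definition kscale (a : k) (X : L) : L := (a%:A : R) *: X.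

Definition is_LieRinehart : Prop :=
  (forall a X Y Z, lb (kscale a X + Y) Z = kscale a (lb X Z) + lb Y Z) /\
      (forall a X Y Z, lb X (kscale a Y + Z) = kscale a (lb X Y) + lb X Z) /\
      (forall X, lb X X = 0) /\
      (forall X Y Z, lb X (lb Y Z) + lb Y (lb Z X) + lb Z (lb X Y) = 0) /\
      (forall X (a : k) f g, rho X (a *: f + g) = a *: rho X f + rho X g) /\
      (forall X f g, rho X (f * g) = rho X f * g + f * rho X g) /\
      (forall f X Y g, rho (f *: X + Y) g = f * rho X g + rho Y g) /\
      (forall X Y g, rho (lb X Y) g = rho X (rho Y g) - rho Y (rho X g)) /\
      (forall X f Y, lb X (f *: Y) = rho X f *: Y + f *: lb X Y).

Definition is_connection : Prop :=
  [/\ (forall f X Y Z, conn (f *: X + Y) Z = f *: conn X Z + conn Y Z),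
      (forall X Y Z, conn X (Y + Z) = conn X Y + conn X Z) &
      (forall X f Y, conn X (f *: Y) = rho X f *: Y + f *: conn X Y)].

Definition torsion (X Y : L) : L := conn X Y - conn Y X - lb X Y.

Definition curvature (X Y Z : L) : L :=
  conn X (conn Y Z) - conn Y (conn X Z) - conn (lb X Y) Z.

Definition is_postLieRinehart : Prop :=
  [/\ is_LieRinehart, is_connection,
      (forall X Y Z, curvature X Y Z = 0) &
      (forall X Y Z, conn X (torsion Y Z) = torsion (conn X Y) Z + torsion Y (conn X Z))].

Definition plbr (X Y : L) : L := - torsion X Y.

(* extension of the connection to endomorphisms of L *)
Definition connHom (X : L) (u : L -> L) : L -> L :=
  fun Y => conn X (u Y) - u (conn X Y).

Definition delta (X : L) : L -> L := fun Z => conn Z X.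
Definition delta_tilde (X : L) : L -> L := fun Z => conn Z X + plbr Z X.

End PostLieRinehart.

Inductive gen_alg (R : comRingType) (L : lmodType R) (S : (L -> L) -> Prop)
  : (L -> L) -> Prop :=
| ga_gen u : S u -> gen_alg S u
| ga_zero : gen_alg S (fun _ => 0)
| ga_add u v : gen_alg S u -> gen_alg S v -> gen_alg S (fun Z => u Z + v Z)
| ga_scale (f : R) u : gen_alg S u -> gen_alg S (fun Z => f *: u Z)
| ga_comp u v : gen_alg S u -> gen_alg S v -> gen_alg S (fun Z => u (v Z)).

(* generators of El_R(L): Y1 |> (Y2 |> ( ... (Yn |> delta X))) *)
Definition El_gens (k : fieldType) (R : comAlgType k) (L : lmodType R)
  (conn : L -> L -> L) (u : L -> L) : Prop :=
  exists (X : L) (Ys : seq L),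
    u = foldr (fun Y v => connHom conn Y v) (delta conn X) Ys.

Definition El (k : fieldType) (R : comAlgType k) (L : lmodType R)
  (conn : L -> L -> L) : (L -> L) -> Prop := gen_alg (El_gens conn).

Definition delta_gens (k : fieldType) (R : comAlgType k) (L : lmodType R)
  (lb conn : L -> L -> L) (u : L -> L) : Prop :=
  exists X : L, u = delta conn X \/ u = delta_tilde lb conn X.

(* Main.v *)
Require Import Defs.
From mathcomp Require Import all_boot all_order all_algebra.
From Stdlib Require Import FunctionalExtensionality.
Set Implicit Arguments. Unset Strict Implicit. Unset Printing Implicit Defensive.
Import GRing.Theory.
Local Open Scope ring_scope.

Section Aux.
Variables (k : fieldType) (R : comAlgType k) (L : lmodType R).
Variables (lb : L -> L -> L) (rho : L -> R -> R) (conn : L -> L -> L).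
Hypothesis H : is_postLieRinehart lb rho conn.

Lemma kscale1 (X : L) : kscale 1 X = X.
Proof. by rewrite /kscale !scale1r. Qed.

Lemma lbDl X Y Z : lb (X + Y) Z = lb X Z + lb Y Z.
Proof.
have [[h _] _ _ _] := H.
by have := h 1 X Y Z; rewrite !kscale1.
Qed.

Lemma lbDr X Y Z : lb X (Y + Z) = lb X Y + lb X Z.
Proof.
have [[_ [h _]] _ _ _] := H.
by have := h 1 X Y Z; rewrite !kscale1.
Qed.

Lemma lb_anti X Y : lb X Y = - lb Y X.
Proof.
have [[_ [_ [h _]]] _ _ _] := H.
have := h (X + Y); rewrite lbDl !lbDr !h add0r addr0 => /eqP.
by rewrite addr_eq0 => /eqP.
Qed.

Lemma connDl X Y Z : conn (X + Y) Z = conn X Z + conn Y Z.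
Proof. have [_ [h _ _] _ _] := H. by have := h 1 X Y Z; rewrite !scale1r. Qed.

Lemma connDr X Y Z : conn X (Y + Z) = conn X Y + conn X Z.
Proof. have [_ [_ h _] _ _] := H. exact: h. Qed.

Lemma conn0l Z : conn 0 Z = 0.
Proof. apply: (@addrI _ (conn 0 Z)). by rewrite -connDl !addr0. Qed.

Lemma conn0r Z : conn Z 0 = 0.
Proof. apply: (@addrI _ (conn Z 0)). by rewrite -connDr !addr0. Qed.

Lemma connNl X Z : conn (- X) Z = - conn X Z.
Proof. by apply/eqP; rewrite -addr_eq0 -connDl addNr conn0l. Qed.

Lemma connNr X Z : conn Z (- X) = - conn Z X.
Proof. by apply/eqP; rewrite -addr_eq0 -connDr addNr conn0r. Qed.

Lemma connBl X Y Z : conn (X - Y) Z = conn X Z - conn Y Z.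
Proof. by rewrite connDl connNl. Qed.

Lemma connBr X Y Z : conn Z (X - Y) = conn Z X - conn Z Y.
Proof. by rewrite connDr connNr. Qed.

Lemma connZl f X Z : conn (f *: X) Z = f *: conn X Z.
Proof. have [_ [h _ _] _ _] := H. by have := h f X 0 Z; rewrite addr0 conn0l addr0. Qed.

Lemma connZr f X Z : conn X (f *: Z) = rho X f *: Z + f *: conn X Z.
Proof. have [_ [_ _ h] _ _] := H. exact: h. Qed.

Lemma flat X Y Z : conn X (conn Y Z) = conn Y (conn X Z) + conn (lb X Y) Z.
Proof.
have [_ _ h _] := H.
by apply/eqP; rewrite -subr_eq0 opprD addrA; apply/eqP; exact: h.
Qed.

Lemma ctors X Y Z :
  conn X (torsion lb conn Y Z) = torsion lb conn (conn X Y) Z + torsion lb conn Y (conn X Z).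
Proof. have [_ _ _ h] := H. exact: h. Qed.

Lemma plbr_alt Z X : conn Z X + plbr lb conn Z X = conn X Z - lb X Z.
Proof.
rewrite /plbr /torsion (lb_anti Z X) !opprB.
by rewrite addrCA [conn Z X + _]addrC subrK addrC.
Qed.

Lemma key1 X Y Z : conn X (conn Z Y) - conn (conn X Z) Y
  = conn Z (conn X Y) - conn (conn Z X + plbr lb conn Z X) Y.
Proof.
by rewrite flat plbr_alt connBl opprB -addrA.
Qed.


Lemma key2 X Y Z :
  conn X (conn Z Y + plbr lb conn Z Y) - (conn (conn X Z) Y + plbr lb conn (conn X Z) Y)
  = conn Z (conn X Y) + plbr lb conn Z (conn X Y) - conn (conn Z X + plbr lb conn Z X) Y.
Proof.
have E : conn X (plbr lb conn Z Y) - plbr lb conn (conn X Z) Y = plbr lb conn Z (conn X Y).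
  by rewrite /plbr connNr ctors opprK opprD addrAC addNr add0r.
by rewrite connDr opprD addrACA key1 E addrAC.
Qed.

Lemma zmod3 (V : zmodType) (a1 a2 b1 b2 c1 c2 : V) :
  (a1 + a2) - (b1 + b2) - (c1 + c2) = (a1 - b1 - c1) + (a2 - b2 - c2).
Proof.
by rewrite addrACA -opprD (addrACA a1) -opprD.
Qed.

Lemma plbrDl a b X : plbr lb conn (a + b) X = plbr lb conn a X + plbr lb conn b X.
Proof. by rewrite /plbr /torsion connDl connDr lbDl zmod3 opprD. Qed.

Definition D := delta_gens lb conn.

Lemma gen_add u : gen_alg D u -> forall a b, u (a + b) = u a + u b.
Proof.
elim => {u}.
- move=> u [Y [->|->]] a b; rewrite /delta /delta_tilde.
    by rewrite connDl.
  by rewrite connDl plbrDl addrACA.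
- by move=> a b; rewrite addr0.
- by move=> u v _ Hu _ Hv a b; rewrite Hu Hv addrACA.
- by move=> f u _ Hu a b; rewrite Hu scalerDr.
- by move=> u v _ Hu _ Hv a b; rewrite Hv Hu.
Qed.

Lemma gen_sub u : gen_alg D u -> forall a b, u (a - b) = u a - u b.
Proof.
move=> gu a b.
have u0 : u 0 = 0.
  by apply: (@addrI _ (u 0)); rewrite -(gen_add gu) !addr0.
have uN : u (- b) = - u b.
  by apply/eqP; rewrite -addr_eq0 -(gen_add gu) addNr u0.
by rewrite (gen_add gu) uN.
Qed.

Lemma closure u : gen_alg D u -> forall X, gen_alg D (connHom conn X u).
Proof.
elim => {u}.
- move=> u [Y [->|->]] X.
    have -> : connHom conn X (delta conn Y) =
      (fun Z => delta conn (conn X Y) Z + (-1) *: (fun W => delta conn Y (delta_tilde lb conn X W)) Z).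
      by apply: functional_extensionality => Z; rewrite /connHom /delta /delta_tilde scaleN1r key1.
    apply: ga_add; first by apply: ga_gen; exists (conn X Y); left.
    apply: ga_scale; apply: ga_comp; apply: ga_gen.
      by exists Y; left.
    by exists X; right.
  have -> : connHom conn X (delta_tilde lb conn Y) =
    (fun Z => delta_tilde lb conn (conn X Y) Z + (-1) *: (fun W => delta conn Y (delta_tilde lb conn X W)) Z).
    by apply: functional_extensionality => Z; rewrite /connHom /delta /delta_tilde scaleN1r key2.
  apply: ga_add; first by apply: ga_gen; exists (conn X Y); right.
  apply: ga_scale; apply: ga_comp; apply: ga_gen.
    by exists Y; left.
  by exists X; right.
- move=> X.
  have -> : connHom conn X (fun _ => 0) = (fun _ => 0).
    by apply: functional_extensionality => Z; rewrite /connHom conn0r subrr.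
  exact: ga_zero.
- move=> u v gu Hu gv Hv X.
  have -> : connHom conn X (fun Z => u Z + v Z) = (fun Z => connHom conn X u Z + connHom conn X v Z).
    apply: functional_extensionality => Z; rewrite /connHom connDr opprD addrACA //.
  exact: ga_add.
- move=> f u gu Hu X.
  have -> : connHom conn X (fun Z => f *: u Z) =
      (fun Z => (fun W => rho X f *: u W) Z + (fun W => f *: connHom conn X u W) Z).
    apply: functional_extensionality => Z.
    by rewrite /connHom connZr scalerBr addrA.
  by apply: ga_add; apply: ga_scale.
- move=> u v gu Hu gv Hv X.
  have -> : connHom conn X (fun Z => u (v Z)) =
      (fun Z => (fun W => connHom conn X u (v W)) Z + (fun W => u (connHom conn X v W)) Z).
    apply: functional_extensionality => Z.
    by rewrite /connHom gen_sub // addrA subrK.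
  by apply: ga_add; apply: ga_comp.
Qed.

End Aux.

Theorem mainTheorem5 (k : fieldType) (R : comAlgType k) (L : lmodType R)
  (lb : L -> L -> L) (rho : L -> R -> R) (conn : L -> L -> L) :
  is_postLieRinehart lb rho conn ->
  forall u : L -> L, El conn u -> gen_alg (delta_gens lb conn) u.
Proof.
move=> H u; rewrite /El; elim => {u}.
- move=> u [X [Ys ->]]; elim: Ys => [|Y Ys IH] /=.
    by apply: ga_gen; exists X; left.
  exact: (closure H).
- exact: ga_zero.
- by move=> u v _ Hu _ Hv; apply: ga_add.
- by move=> f u _ Hu; apply: ga_scale.
- by move=> u v _ Hu _ Hv; apply: ga_comp.
Qed.
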